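(* The function $F(x)=\beta_{i_1(x),1}+\sum_{k=2}^{\infty}\Big[\tilde\beta_{i_k(x),k}\prod_{j=1}^{k-1}\tilde p_{i_j(x),j}\Big]$, $x=\Delta^{-\tilde Q}_{i_1(x)i_2(x)\dots}$, is continuous at every point of $[0,1]$.
   Context: Let $(m_n)_{n\ge1}$ be finite nonnegative integers and $\tilde Q=\|q_{i,n}\|$ ($i\in\{0,\dots,m_n\}$) with $q_{i,n}>0$, $\sum_{i}q_{i,n}=1$ for all $n$, and $\prod_n q_{i_n,n}=0$ for every digit sequence $(i_n)$. Put $a_{0,n}=0$, $a_{i,n}=\sum_{l<i}q_{l,n}$; $\Delta^{\tilde Q}_{j_1j_2\dots}=a_{j_1,1}+\sum_{n\ge2}a_{j_n,n}\prod_{l<n}q_{j_l,l}$. For odd $n$: $\tilde q_{i,n}=q_{i,n}$, $\tilde a_{i,n}=a_{i,n}$; for even $n$: $\tilde q_{i,n}=q_{m_n-i,n}$, $\tilde a_{i,n}=a_{m_n-i,n}$. The nega-$\tilde Q$-representation $x=\Delta^{-\tilde Q}_{i_1i_2\dots}$ means $x=\Delta^{\tilde Q}_{i_1[m_2-i_2]i_3[m_4-i_4]\dots}$; every $x\in[0,1]$ has one, and numbers $\Delta^{-\tilde Q}_{i_1\dots i_nm_{n+1}0m_{n+3}0\dots}=\Delta^{-\tilde Q}_{i_1\dots[i_n-1]0m_{n+2}0m_{n+4}\dots}$ ($i_n\ne0$) have two (the value of $F$ is the same for both). Let $P=\|p_{i,n}\|$ have the same shape with $p_{i,n}\in(-1,1)$,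 $\sum_ip_{i,n}=1$, $\prod_n|p_{i_n,n}|=0$ for every digit sequence, $0<\sum_{i<c}p_{i,n}<1$ for $c\in\{1,\dots,m_n\}$. Put $\beta_{0,n}=0$, $\beta_{c,n}=\sum_{i<c}p_{i,n}$; for odd $n$: $\tilde p_{i,n}=p_{i,n}$, $\tilde\beta_{i,n}=\beta_{i,n}$; for even $n$: $\tilde p_{i,n}=p_{m_n-i,n}$, $\tilde\beta_{i,n}=\beta_{m_n-i,n}$. *)

(* Defs.v *)
From Stdlib Require Import Reals Lra ClassicalEpsilon.
From Coquelicot Require Import Coquelicot.
Open Scope R_scope.

(* Indexing convention: the paper's index n >= 1 corresponds to k = n - 1 >= 0.
   So the paper's odd n are the even k, the paper's even n are the odd k.
   m k : nat is m_{k+1};  q k i is q_{i,k+1};  p k i is p_{i,k+1}. *)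

Fixpoint sumR (f : nat -> R) (n : nat) : R :=
  match n with O => 0 | S n' => sumR f n' + f n' end.
Fixpoint prodR (f : nat -> R) (n : nat) : R :=
  match n with O => 1 | S n' => prodR f n' * f n' end.

(* a_{i,n} = sum_{l<i} q_{l,n}  (also used for beta with p) *)
Definition acc (q : nat -> nat -> R) (k i : nat) : R := sumR (q k) i.

Definition tld (m : nat -> nat) (f : nat -> nat -> R) (k i : nat) : R :=
  if Nat.odd k then f k (m k - i)%nat else f k i.

Definition digits_ok (m : nat -> nat) (d : nat -> nat) : Prop :=
  forall k, (d k <= m k)%nat.

Definition Q_ok (m : nat -> nat) (q : nat -> nat -> R) : Prop :=
  (forall k i, (i <= m k)%nat -> 0 < q k i) /\
  (forall k, sumR (q k) (S (m k)) = 1) /\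
  (forall d, digits_ok m d ->
     is_lim_seq (fun n => prodR (fun l => q l (d l)) n) 0).

Definition P_ok (m : nat -> nat) (p : nat -> nat -> R) : Prop :=
  (forall k i, (i <= m k)%nat -> -1 < p k i < 1) /\
  (forall k, sumR (p k) (S (m k)) = 1) /\
  (forall d, digits_ok m d ->
     is_lim_seq (fun n => prodR (fun l => Rabs (p l (d l))) n) 0) /\
  (forall k c, (1 <= c <= m k)%nat -> 0 < sumR (p k) c < 1).

Definition nega_term (m : nat -> nat) (q : nat -> nat -> R) (d : nat -> nat)
  (k : nat) : R :=
  tld m (acc q) k (d k) * prodR (fun l => tld m q l (d l)) k.

Definition nega_rep (m : nat -> nat) (q : nat -> nat -> R) (x : R)
  (d : nat -> nat) : Prop :=
  digits_ok m d /\ is_series (nega_term m q d) x.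

(* the chosen nega-Q~ digits of x (any representation; for x in [0,1]
   one exists) *)
Definition nega_digits (m : nat -> nat) (q : nat -> nat -> R) (x : R)
  : nat -> nat :=
  epsilon (inhabits (fun _ : nat => 0%nat)) (nega_rep m q x).

Definition F (m : nat -> nat) (q p : nat -> nat -> R) (x : R) : R :=
  Series (nega_term m p (nega_digits m q x)).

(* Main.v *)
Require Import Defs.
From Stdlib Require Import Reals Lra Lia ClassicalEpsilon Classical.
From Coquelicot Require Import Coquelicot.
Open Scope R_scope.

Definition Pi (w : nat -> nat -> R) (e : nat -> nat) (n : nat) : R :=
  prodR (fun l => w l (e l)) n.
Definition term (w : nat -> nat -> R) (e : nat -> nat) (k : nat) : R :=
  acc w k (e k) * Pi w e k.
Definition Sm (w : nat -> nat -> R) (e : nat -> nat) (n : nat) : R :=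
  sumR (term w e) n.

Definition Wok (m : nat -> nat) (w : nat -> nat -> R) : Prop :=
  (forall k, sumR (w k) (S (m k)) = 1) /\
  (forall k c, (c <= S (m k))%nat -> 0 <= acc w k c <= 1) /\
  (forall e, digits_ok m e -> is_lim_seq (Pi w e) 0).

Lemma acc_S w k c : acc w k (S c) = acc w k c + w k c.
Proof. reflexivity. Qed.

Lemma Pi_S w e n : Pi w e (S n) = Pi w e n * w n (e n).
Proof. reflexivity. Qed.

Lemma Sm_S w e n : Sm w e (S n) = Sm w e n + acc w n (e n) * Pi w e n.
Proof. reflexivity. Qed.

Lemma Sm_0 w e : Sm w e 0 = 0. Proof. reflexivity. Qed.
Lemma Pi_0 w e : Pi w e 0 = 1. Proof. reflexivity. Qed.

Lemma w_abs_le1 m w : Wok m w -> forall k i, (i <= m k)%nat -> Rabs (w k i) <= 1.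
Proof.
  intros [_ [H2 _]] k i Hi.
  pose proof (H2 k i ltac:(lia)) as A. pose proof (H2 k (S i) ltac:(lia)) as B.
  rewrite acc_S in B. apply Rabs_le. lra.
Qed.

Lemma Pi_abs_mono m w e : Wok m w -> digits_ok m e ->
  forall n k, (n <= k)%nat -> Rabs (Pi w e k) <= Rabs (Pi w e n).
Proof.
  intros HW He n k Hnk. induction Hnk. lra.
  rewrite Pi_S, Rabs_mult.
  pose proof (w_abs_le1 m w HW m0 (e m0) (He m0)).
  pose proof (Rabs_pos (Pi w e m0)). pose proof (Rabs_pos (w m0 (e m0))). nra.
Qed.

Lemma inv_step m w e : Wok m w -> digits_ok m e -> forall n k,
  exists t t', 0 <= t <= 1 /\ 0 <= t' <= 1 /\
   Sm w e (n + k) = Sm w e n + t * Pi w e n /\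
   Sm w e (n + k) + Pi w e (n + k) = Sm w e n + t' * Pi w e n.
Proof.
  intros HW He n k. induction k.
  - exists 0, 1. rewrite Nat.add_0_r. repeat split; lra.
  - destruct IHk as [t [t' [Ht [Ht' [E1 E2]]]]].
    destruct HW as [_ [H2 _]].
    pose proof (H2 (n+k)%nat (e (n+k)%nat) ltac:(specialize (He (n+k)%nat); lia)) as A.
    pose proof (H2 (n+k)%nat (S (e (n+k)%nat)) ltac:(specialize (He (n+k)%nat); lia)) as B.
    rewrite acc_S in B.
    set (a := acc w (n+k)%nat (e (n+k)%nat)) in *.
    set (b := w (n+k)%nat (e (n+k)%nat)) in *.
    assert (EP : Pi w e (n+k) = (t' - t) * Pi w e n) by lra.
    exists (t + a * (t' - t)), (t + (a + b) * (t' - t)).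
    replace (n + S k)%nat with (S (n + k)) by lia.
    rewrite Sm_S, Pi_S. fold a b.
    repeat split; try nra.
Qed.

Lemma lim_bounds (u : nat -> R) (L a b : R) n0 : is_lim_seq u L ->
  (forall N, (n0 <= N)%nat -> a <= u N <= b) -> a <= L <= b.
Proof.
  intros Hl Hb. apply (is_lim_seq_Reals u L) in Hl.
  split; apply Rnot_lt_le; intro C.
  - destruct (Hl (a - L) ltac:(lra)) as [N HN].
    specialize (HN (max N n0) ltac:(lia)). specialize (Hb (max N n0) ltac:(lia)).
    unfold Rdist in HN. apply Rabs_lt_between in HN. lra.
  - destruct (Hl (L - b) ltac:(lra)) as [N HN].
    specialize (HN (max N n0) ltac:(lia)). specialize (Hb (max N n0) ltac:(lia)).
    unfold Rdist in HN. apply Rabs_lt_between in HN. lra.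
Qed.

Lemma zero_of_small (c : R) (u : nat -> R) N0 : is_lim_seq u 0 ->
  (forall N, (N0 <= N)%nat -> Rabs c <= Rabs (u N)) -> c = 0.
Proof.
  intros Hl Hb. apply (is_lim_seq_Reals u 0) in Hl.
  destruct (Req_dec c 0) as [|Hc]; auto. exfalso.
  assert (Hp: 0 < Rabs c) by (apply Rabs_pos_lt; auto).
  destruct (Hl (Rabs c) Hp) as [N HN].
  specialize (HN (max N N0) ltac:(lia)). specialize (Hb (max N N0) ltac:(lia)).
  unfold Rdist in HN. rewrite Rminus_0_r in HN. lra.
Qed.

Lemma sumR_f_R0 (a : nat -> R) n : sumR a (S n) = sum_f_R0 a n.
Proof. induction n as [|n IH]. simpl. ring. change (sumR a (S n) + a (S n) = sum_f_R0 a n + a (S n)). rewrite IH. reflexivity. Qed.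

Lemma core m w e : Wok m w -> digits_ok m e ->
  exists V : R, is_series (term w e) V /\
   forall n, exists t, 0 <= t <= 1 /\ V = Sm w e n + t * Pi w e n.
Proof.
  intros HW He.
  assert (Hc : Cauchy_crit (Sm w e)).
  { intros eps Heps. destruct HW as [H1 [H2 H3]].
    pose proof (H3 e He) as L. apply is_lim_seq_Reals in L.
    destruct (L eps Heps) as [N HN]. exists N. intros n k Hn Hk.
    unfold Rdist.
    assert (G : forall a b, (N <= a <= b)%nat -> Rabs (Sm w e b - Sm w e a) < eps).
    { intros a b Hab.
      destruct (inv_step m w e (conj H1 (conj H2 H3)) He a (b - a)) as [t [t' [Ht [_ [E _]]]]].
      replace (a + (b - a))%nat with b in E by lia. rewrite E.
      replace (Sm w e a + t * Pi w e a - Sm w e a) with (t * Pi w e a) by ring.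
      rewrite Rabs_mult. specialize (HN a ltac:(lia)). unfold Rdist in HN.
      rewrite Rminus_0_r in HN. rewrite (Rabs_right t) by lra.
      pose proof (Rabs_pos (Pi w e a)). nra. }
    destruct (Nat.le_ge_cases n k).
    - rewrite Rabs_minus_sym. apply G; lia.
    - apply G; lia. }
  destruct (Rcomplete.R_complete _ Hc) as [V HV].
  exists V. split.
  - apply is_series_Reals. intros eps Heps. destruct (HV eps Heps) as [N HN].
    exists N. intros n Hn. rewrite <- sumR_f_R0. apply (HN (S n)). lia.
  - intros n. apply is_lim_seq_Reals in HV.
    assert (B : forall N, (n <= N)%nat ->
       0 <= (Sm w e N - Sm w e n) * Pi w e n <= Pi w e n * Pi w e n).
    { intros N HN. destruct (inv_step m w e HW He n (N - n)) as [t [t' [Ht [_ [E _]]]]].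
      replace (n + (N - n))%nat with N in E by lia. rewrite E.
      replace ((Sm w e n + t * Pi w e n - Sm w e n) * Pi w e n) with (t * (Pi w e n * Pi w e n)) by ring.
      pose proof (Rle_0_sqr (Pi w e n)). unfold Rsqr in H. nra. }
    assert (HL : is_lim_seq (fun N => (Sm w e N - Sm w e n) * Pi w e n) ((V - Sm w e n) * Pi w e n)).
    { apply (is_lim_seq_mult' _ (fun _ => Pi w e n)).
      - apply (is_lim_seq_minus' _ (fun _ => Sm w e n)); auto. apply is_lim_seq_const.
      - apply is_lim_seq_const. }
    pose proof (lim_bounds _ _ _ _ n HL B) as Bd.
    destruct (Req_dec (Pi w e n) 0) as [Z|Z].
    + exists 0. split. lra. rewrite Z, Rmult_0_r, Rplus_0_r.
      assert (HL2 : is_lim_seq (fun N => Sm w e N - Sm w e n) (V - Sm w e n)).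
      { apply (is_lim_seq_minus' _ (fun _ => Sm w e n)); auto. apply is_lim_seq_const. }
      assert (Bd2 := lim_bounds _ _ 0 0 n HL2).
      enough (0 <= V - Sm w e n <= 0) by lra. apply Bd2.
      intros N HN. destruct (inv_step m w e HW He n (N - n)) as [t [t' [Ht [_ [E _]]]]].
      replace (n + (N - n))%nat with N in E by lia. rewrite E, Z. lra.
    + exists ((V - Sm w e n) / Pi w e n).
      assert (0 < Pi w e n * Pi w e n) by (apply Rsqr_pos_lt; auto).
      split.
      * split.
        -- apply (Rmult_le_reg_r (Pi w e n * Pi w e n)); auto.
           replace ((V - Sm w e n) / Pi w e n * (Pi w e n * Pi w e n)) with ((V - Sm w e n) * Pi w e n) by (field; auto). lra.
        -- apply (Rmult_le_reg_r (Pi w e n * Pi w e n)); auto.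
           replace ((V - Sm w e n) / Pi w e n * (Pi w e n * Pi w e n)) with ((V - Sm w e n) * Pi w e n) by (field; auto). lra.
      * field; auto.
Qed.
Definition Val (w : nat -> nat -> R) (e : nat -> nat) : R := Series (term w e).

Lemma Val_rep m w e : Wok m w -> digits_ok m e ->
  is_series (term w e) (Val w e) /\
  forall n, exists t, 0 <= t <= 1 /\ Val w e = Sm w e n + t * Pi w e n.
Proof.
  intros HW He. destruct (core m w e HW He) as [V [HV H]].
  unfold Val. rewrite (is_series_unique _ _ HV). auto.
Qed.

Definition agree (a b : nat -> nat) (n : nat) : Prop := forall k, (k < n)%nat -> a k = b k.

Lemma Pi_agree w a b n : agree a b n -> Pi w a n = Pi w b n.
Proof.
  induction n; intros H. reflexivity.
  rewrite !Pi_S, IHn. rewrite (H n ltac:(lia)). reflexivity.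
  intros k Hk. apply H. lia.
Qed.

Lemma Sm_agree w a b n : agree a b n -> Sm w a n = Sm w b n.
Proof.
  induction n; intros H. reflexivity.
  rewrite !Sm_S, IHn, (Pi_agree w a b n). rewrite (H n ltac:(lia)). reflexivity.
  all: intros k Hk; apply H; lia.
Qed.

Lemma Val_close m w a b N : Wok m w -> digits_ok m a -> digits_ok m b -> agree a b N ->
  Rabs (Val w a - Val w b) <= Rabs (Pi w a N).
Proof.
  intros HW Ha Hb Hab.
  destruct (proj2 (Val_rep m w a HW Ha) N) as [t [Ht Et]].
  destruct (proj2 (Val_rep m w b HW Hb) N) as [t' [Ht' Et']].
  rewrite Et, Et', (Sm_agree w b a N), (Pi_agree w b a N).
  replace (Sm w a N + t * Pi w a N - (Sm w a N + t' * Pi w a N)) with ((t - t') * Pi w a N) by ring.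
  rewrite Rabs_mult. pose proof (Rabs_pos (Pi w a N)).
  assert (Rabs (t - t') <= 1) by (apply Rabs_le; lra). nra.
  all: intros k Hk; symmetry; apply Hab; auto.
Qed.

Lemma acc_0 w k : acc w k 0 = 0. Proof. reflexivity. Qed.

Lemma Val_zeros m w a j0 : Wok m w -> digits_ok m a -> (forall k, (j0 <= k)%nat -> a k = 0%nat) ->
  Val w a = Sm w a j0.
Proof.
  intros HW Ha Hz.
  assert (E : forall N, (j0 <= N)%nat -> Sm w a N = Sm w a j0).
  { intros N HN. induction HN. reflexivity. rewrite Sm_S, IHHN, Hz, acc_0 by lia. ring. }
  enough (Val w a - Sm w a j0 = 0) by lra.
  apply (zero_of_small _ (Pi w a) j0). apply HW; auto.
  intros N HN. destruct (proj2 (Val_rep m w a HW Ha) N) as [t [Ht Et]].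
  rewrite Et, (E N HN). replace (Sm w a j0 + t * Pi w a N - Sm w a j0) with (t * Pi w a N) by ring.
  rewrite Rabs_mult. pose proof (Rabs_pos (Pi w a N)). rewrite (Rabs_right t) by lra. nra.
Qed.

Lemma Val_ms m w a j0 : Wok m w -> digits_ok m a -> (forall k, (j0 <= k)%nat -> a k = m k) ->
  Val w a = Sm w a j0 + Pi w a j0.
Proof.
  intros HW Ha Hz.
  assert (E : forall N, (j0 <= N)%nat -> Sm w a N + Pi w a N = Sm w a j0 + Pi w a j0).
  { intros N HN. induction HN. reflexivity. rewrite Sm_S, Pi_S, <- IHHN, Hz by lia.
    destruct HW as [H1 _]. specialize (H1 m0). change (sumR (w m0) (S (m m0))) with (acc w m0 (S (m m0))) in H1.
    rewrite acc_S in H1.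
    replace (acc w m0 (m m0)) with (1 - w m0 (m m0)) by lra. ring. }
  enough (Val w a - (Sm w a j0 + Pi w a j0) = 0) by lra.
  apply (zero_of_small _ (Pi w a) j0). apply HW; auto.
  intros N HN. destruct (proj2 (Val_rep m w a HW Ha) N) as [t [Ht Et]].
  rewrite Et, <- (E N HN). replace (Sm w a N + t * Pi w a N - (Sm w a N + Pi w a N)) with ((t - 1) * Pi w a N) by ring.
  rewrite Rabs_mult. pose proof (Rabs_pos (Pi w a N)).
  assert (Rabs (t - 1) <= 1) by (apply Rabs_le; lra). nra.
Qed.
Definition upd (d : nat -> nat) (n c : nat) : nat -> nat :=
  fun k => if Nat.eqb k n then c else d k.

Lemma fin_bound (M : nat) (P : nat -> nat -> Prop) :
  (forall c N N', P c N -> (N <= N')%nat -> P c N') ->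
  (forall c, (c <= M)%nat -> exists N, P c N) -> exists N, forall c, (c <= M)%nat -> P c N.
Proof.
  intros Hm H. induction M.
  - destruct (H 0%nat ltac:(lia)) as [N HN]. exists N. intros c Hc. replace c with 0%nat by lia. auto.
  - destruct IHM as [N1 HN1]. intros c Hc; apply H; lia.
    destruct (H (S M) ltac:(lia)) as [N2 HN2]. exists (max N1 N2). intros c Hc.
    destruct (Nat.eq_dec c (S M)) as [->|].
    + apply (Hm _ N2); auto; lia.
    + apply (Hm _ N1); [apply HN1; lia | lia].
Qed.

Lemma is_lim_small (u : nat -> R) eps : is_lim_seq u 0 -> 0 < eps -> exists N, Rabs (u N) < eps.
Proof.
  intros H He. apply (is_lim_seq_Reals u 0) in H. destruct (H eps He) as [N HN].
  exists N. specialize (HN N (le_n N)). unfold Rdist in HN. rewrite Rminus_0_r in HN. auto.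
Qed.

Lemma koenig m w : Wok m w -> forall eps, 0 < eps ->
  exists N, forall e, digits_ok m e -> Rabs (Pi w e N) < eps.
Proof.
  intros HW eps Heps. apply NNPP. intro Hn.
  assert (H0 : forall N, exists e, digits_ok m e /\ eps <= Rabs (Pi w e N)).
  { intros N. apply NNPP. intro C. apply Hn. exists N. intros e He.
    apply Rnot_le_lt. intro D. apply C. exists e. auto. }
  set (Good := fun n d => forall N, exists e, digits_ok m e /\ agree e d n /\ eps <= Rabs (Pi w e N)).
  assert (Step : forall n d, Good n d -> exists c, (c <= m n)%nat /\ Good (S n) (upd d n c)).
  { intros n d Hg. apply NNPP. intro C.
    assert (Hb : forall c, (c <= m n)%nat -> exists N, forall e, digits_ok m e ->
               agree e (upd d n c) (S n) -> Rabs (Pi w e N) < eps).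
    { intros c Hc. apply NNPP. intro C2. apply C. exists c. split; auto.
      intros N. apply NNPP. intro C3. apply C2. exists N. intros e He Ha.
      apply Rnot_le_lt. intro D. apply C3. exists e. auto. }
    destruct (fin_bound (m n) (fun c N => forall e, digits_ok m e ->
               agree e (upd d n c) (S n) -> Rabs (Pi w e N) < eps)) with (2 := Hb) as [N HN].
    { intros c N N' HP HN e He Ha. simpl in HP.
      pose proof (Pi_abs_mono m w e HW He N N' HN). specialize (HP e He Ha). lra. }
    destruct (Hg N) as [e [He [Ha Hl]]].
    specialize (HN (e n) (He n) e He).
    assert (agree e (upd d n (e n)) (S n)).
    { intros k Hk. unfold upd. destruct (Nat.eqb_spec k n). subst; auto. apply Ha. lia. }
    specialize (HN H). lra. }
  set (f := fun n d => epsilon (inhabits 0%nat) (fun c => (c <= m n)%nat /\ Good (S n) (upd d n c))).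
  assert (Hf : forall n d, Good n d -> (f n d <= m n)%nat /\ Good (S n) (upd d n (f n d))).
  { intros n d Hg. unfold f. apply epsilon_spec. apply Step; auto. }
  set (D := fix D n := match n with O => fun _ => 0%nat | S n' => upd (D n') n' (f n' (D n')) end).
  assert (GD : forall n, Good n (D n)).
  { induction n. intros N. destruct (H0 N) as [e [He Hl]]. exists e. repeat split; auto.
    intros k Hk; lia. apply (Hf n (D n) IHn). }
  set (L := fun k => f k (D k)).
  assert (AL : forall n k, (k < n)%nat -> D n k = L k).
  { induction n; intros k Hk. lia. simpl. unfold upd. destruct (Nat.eqb_spec k n). subst; reflexivity.
    apply IHn. lia. }
  assert (OL : digits_ok m L). { intros k. apply (Hf k (D k) (GD k)). }
  assert (BL : forall n, eps <= Rabs (Pi w L n)).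
  { intros n. destruct (GD n n) as [e [He [Ha Hl]]]. rewrite (Pi_agree w L e n). auto.
    intros k Hk. rewrite (Ha k Hk). symmetry. apply AL; auto. }
  destruct (is_lim_small _ eps (proj2 (proj2 HW) L OL) Heps) as [N HN].
  specialize (BL N). lra.
Qed.
Lemma Sm_zeros w a j0 : (forall k, (j0 <= k)%nat -> a k = 0%nat) ->
  forall N, (j0 <= N)%nat -> Sm w a N = Sm w a j0.
Proof. intros Hz N HN. induction HN. reflexivity. rewrite Sm_S, IHHN, Hz, acc_0 by lia. ring. Qed.

Lemma Sm_ms m w a j0 : Wok m w -> (forall k, (j0 <= k)%nat -> a k = m k) ->
  forall N, (j0 <= N)%nat -> Sm w a N + Pi w a N = Sm w a j0 + Pi w a j0.
Proof.
  intros HW Hz N HN. induction HN. reflexivity. rewrite Sm_S, Pi_S, <- IHHN, Hz by lia.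
  destruct HW as [H1 _]. specialize (H1 m0). change (sumR (w m0) (S (m m0))) with (acc w m0 (S (m m0))) in H1.
  rewrite acc_S in H1.
  replace (acc w m0 (m m0)) with (1 - w m0 (m m0)) by lra. ring.
Qed.

Definition Qpos (m : nat -> nat) (q : nat -> nat -> R) : Prop :=
  Wok m q /\ forall k i, (i <= m k)%nat -> 0 < q k i.

Lemma Pi_pos m q e : Qpos m q -> digits_ok m e -> forall n, 0 < Pi q e n.
Proof.
  intros [_ Hq] He n. induction n. rewrite Pi_0; lra.
  rewrite Pi_S. apply Rmult_lt_0_compat; auto.
Qed.

Lemma q_le1 m q k i : Qpos m q -> (i <= m k)%nat -> q k i <= 1.
Proof. intros [HW _] Hi. pose proof (w_abs_le1 m q HW k i Hi). apply Rabs_le_between in H. lra. Qed.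

Lemma Pi_q_mono m q e : Qpos m q -> digits_ok m e -> forall n N, (n <= N)%nat -> Pi q e N <= Pi q e n.
Proof.
  intros HQ He n N HN. induction HN. lra.
  rewrite Pi_S. pose proof (Pi_pos m q e HQ He m0). pose proof (q_le1 m q m0 (e m0) HQ (He m0)).
  pose proof (proj2 HQ m0 (e m0) (He m0)). nra.
Qed.

Lemma acc_mono m q k c c' : Qpos m q -> (c <= c')%nat -> (c' <= S (m k))%nat -> acc q k c <= acc q k c'.
Proof.
  intros HQ Hc Hc'. induction Hc. lra.
  rewrite acc_S. pose proof (proj2 HQ k m0 ltac:(lia)). specialize (IHHc ltac:(lia)). lra.
Qed.

Lemma fin_min (M : nat) (f : nat -> R) : (forall i, (i <= M)%nat -> 0 < f i) ->
  exists c, 0 < c /\ forall i, (i <= M)%nat -> c <= f i.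
Proof.
  intros H. induction M.
  - exists (f 0%nat). split. apply H; lia. intros i Hi. replace i with 0%nat by lia. lra.
  - destruct IHM as [c [Hc Hci]]. intros i Hi; apply H; lia.
    exists (Rmin c (f (S M))). split. apply Rmin_pos; [auto | apply H; lia].
    intros i Hi. destruct (Nat.eq_dec i (S M)) as [->|]. apply Rmin_r.
    eapply Rle_trans. apply Rmin_l. apply Hci. lia.
Qed.

Lemma lower m q : Qpos m q -> forall N, exists delta, 0 < delta /\
  forall e, digits_ok m e -> delta <= Pi q e N.
Proof.
  intros HQ N. induction N.
  - exists 1. split. lra. intros. rewrite Pi_0. lra.
  - destruct IHN as [d [Hd Hde]].
    destruct (fin_min (m N) (q N) (proj2 HQ N)) as [c [Hc Hci]].
    exists (d * c). split. apply Rmult_lt_0_compat; auto.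
    intros e He. rewrite Pi_S. specialize (Hde e He). specialize (Hci (e N) (He N)).
    apply Rmult_le_compat; lra.
Qed.

Lemma upd_ok m a k i : digits_ok m a -> (i <= m k)%nat -> digits_ok m (upd a k i).
Proof. intros Ha Hi l. unfold upd. destruct (Nat.eqb_spec l k); subst; auto. Qed.

Lemma Lbound m q N delta : Qpos m q -> (forall e, digits_ok m e -> delta <= Pi q e N) ->
  forall k a i, (k < N)%nat -> digits_ok m a -> (i <= m k)%nat -> delta <= Pi q a k * q k i.
Proof.
  intros HQ Hd k a i Hk Ha Hi.
  assert (Hu := upd_ok m a k i Ha Hi).
  assert (E : Pi q (upd a k i) (S k) = Pi q a k * q k i).
  { rewrite Pi_S, (Pi_agree q (upd a k i) a k). unfold upd. rewrite Nat.eqb_refl. reflexivity.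
    intros l Hl. unfold upd. destruct (Nat.eqb_spec l k). lia. reflexivity. }
  rewrite <- E. eapply Rle_trans. apply (Hd _ Hu). apply (Pi_q_mono m q); auto.
Qed.

Lemma Val_lo m q a n : Qpos m q -> digits_ok m a -> Sm q a n <= Val q a.
Proof.
  intros HQ Ha. destruct (proj2 (Val_rep m q a (proj1 HQ) Ha) n) as [t [Ht E]].
  pose proof (Pi_pos m q a HQ Ha n). nra.
Qed.

Lemma Val_hi m q a n : Qpos m q -> digits_ok m a -> Val q a <= Sm q a n + Pi q a n.
Proof.
  intros HQ Ha. destruct (proj2 (Val_rep m q a (proj1 HQ) Ha) n) as [t [Ht E]].
  pose proof (Pi_pos m q a HQ Ha n). nra.
Qed.

Lemma first_diff (a b : nat -> nat) N : agree a b N \/ exists j, (j < N)%nat /\ agree a b j /\ a j <> b j.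
Proof.
  induction N.
  - left. intros k Hk. lia.
  - destruct IHN as [H | [j [Hj [Ha Hn]]]].
    + destruct (Nat.eq_dec (a N) (b N)).
      * left. intros k Hk. destruct (Nat.eq_dec k N). subst; auto. apply H. lia.
      * right. exists N. auto.
    + right. exists j. split. lia. auto.
Qed.
Lemma oneside m q p N delta eps : Qpos m q -> Wok m p ->
  (forall e, digits_ok m e -> Rabs (Pi p e N) < eps / 2) ->
  (forall e, digits_ok m e -> delta <= Pi q e N) ->
  forall d d' j, digits_ok m d -> digits_ok m d' -> (j < N)%nat -> agree d d' j ->
  (d j < d' j)%nat -> Rabs (Val q d - Val q d') < delta ->
  Rabs (Val p d - Val p d') < eps.
Proof.
  intros HQ HP Kn Lw d d' j Hd Hd' Hj Ha Hlt Hc.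
  assert (Lb := Lbound m q N delta HQ Lw).
  set (w := fun l => if Nat.leb l j then d l else m l).
  set (z := fun l => if Nat.ltb l j then d l else if Nat.eqb l j then S (d j) else 0%nat).
  assert (Hw : digits_ok m w).
  { intros l. unfold w. destruct (Nat.leb l j); auto. }
  assert (Hz : digits_ok m z).
  { intros l. unfold z. destruct (Nat.ltb_spec l j); auto. destruct (Nat.eqb_spec l j). subst. specialize (Hd' j). lia. lia. }
  assert (Awd : agree w d (S j)).
  { intros k Hk. unfold w. destruct (Nat.leb_spec k j); auto; lia. }
  assert (Azd : agree z d j).
  { intros k Hk. unfold z. destruct (Nat.ltb_spec k j); auto; lia. }
  assert (Zj : z j = S (d j)).
  { unfold z. destruct (Nat.ltb_spec j j). lia. rewrite Nat.eqb_refl. reflexivity. }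
  assert (Wtail : forall k, (S j <= k)%nat -> w k = m k).
  { intros k Hk. unfold w. destruct (Nat.leb_spec k j); auto; lia. }
  assert (Ztail : forall k, (S j <= k)%nat -> z k = 0%nat).
  { intros k Hk. unfold z. destruct (Nat.ltb_spec k j). lia. destruct (Nat.eqb_spec k j). lia. auto. }
  assert (Jval : forall r, Wok m r -> Val r w = Sm r d j + Pi r d j * acc r j (S (d j)) /\
                                     Val r z = Sm r d j + Pi r d j * acc r j (S (d j))).
  { intros r Hr. split.
    - rewrite (Val_ms m r w (S j) Hr Hw Wtail), Sm_S, Pi_S, (Sm_agree r w d j), (Pi_agree r w d j), (Awd j ltac:(lia)), acc_S.
      ring. 1-2: intros k Hk; apply Awd; lia.
    - rewrite (Val_zeros m r z (S j) Hr Hz Ztail), Sm_S, (Sm_agree r z d j Azd), (Pi_agree r z d j Azd), Zj. ring. }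
  destruct (Jval q (proj1 HQ)) as [JqW JqZ]. destruct (Jval p HP) as [JpW JpZ].
  set (Jq := Sm q d j + Pi q d j * acc q j (S (d j))) in *.
  assert (PQd := Pi_pos m q d HQ Hd j).
  assert (C1 : Val q d <= Jq).
  { eapply Rle_trans. apply (Val_hi m q d (S j) HQ Hd). rewrite Sm_S, Pi_S. unfold Jq. rewrite acc_S. lra. }
  assert (Sd' : Sm q d' (S j) = Sm q d j + acc q j (d' j) * Pi q d j).
  { rewrite Sm_S, (Sm_agree q d' d j), (Pi_agree q d' d j). reflexivity.
    all: intros k Hk; symmetry; apply Ha; auto. }
  assert (C2 : Jq <= Val q d').
  { eapply Rle_trans. 2: apply (Val_lo m q d' (S j) HQ Hd'). rewrite Sd'. unfold Jq.
    pose proof (acc_mono m q j (S (d j)) (d' j) HQ Hlt ltac:(specialize (Hd' j); lia)). nra. }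
  assert (Cd : Val q d' - Val q d < delta).
  { rewrite Rabs_minus_sym in Hc. apply Rabs_lt_between in Hc. lra. }
  assert (Az : agree z d' N).
  { destruct (first_diff d' z N) as [H | [l [Hl [Hal Hne]]]].
    - intros k Hk. symmetry. auto.
    - exfalso. destruct (Nat.lt_total l j) as [Hlj | [Hlj | Hlj]].
      + apply Hne. rewrite (Azd l Hlj). symmetry. apply Ha. auto.
      + subst l. rewrite Zj in Hne.
        assert (A2 : acc q j (S (S (d j))) <= acc q j (d' j)).
        { apply (acc_mono m q); [auto | lia | specialize (Hd' j); lia]. }
        rewrite acc_S in A2.
        pose proof (Lb j d (S (d j)) Hj Hd ltac:(specialize (Hd' j); lia)).
        pose proof (Val_lo m q d' (S j) HQ Hd'). rewrite Sd' in H0. unfold Jq in C1. nra.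
      + assert (Z0 : z l = 0%nat) by (apply Ztail; lia).
        rewrite Z0 in Hne.
        pose proof (Val_lo m q d' (S l) HQ Hd') as V1.
        rewrite Sm_S, (Sm_agree q d' z l Hal), (Pi_agree q d' z l Hal) in V1.
        rewrite (Sm_zeros q z (S j) Ztail l ltac:(lia)) in V1.
        rewrite (Val_zeros m q z (S j) (proj1 HQ) Hz Ztail) in JqZ.
        pose proof (acc_mono m q l 1 (d' l) HQ ltac:(lia) ltac:(specialize (Hd' l); lia)) as A1.
        change (acc q l 1) with (0 + q l 0%nat) in A1.
        pose proof (Lb l z 0%nat Hl Hz ltac:(lia)).
        pose proof (Pi_pos m q z HQ Hz l). nra. }
  assert (Aw : agree d w N).
  { destruct (first_diff d w N) as [H | [l [Hl [Hal Hne]]]]. auto.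
    exfalso. destruct (Nat.le_gt_cases l j) as [Hlj | Hlj].
    - apply Hne. symmetry. apply Awd. lia.
    - assert (Wl : w l = m l) by (apply Wtail; lia). rewrite Wl in Hne.
      assert (Hdl : (S (d l) <= m l)%nat) by (specialize (Hd l); lia).
      pose proof (Val_hi m q d (S l) HQ Hd) as V1.
      rewrite Sm_S, Pi_S, (Sm_agree q d w l Hal), (Pi_agree q d w l Hal) in V1.
      pose proof (acc_mono m q l (S (d l)) (m l) HQ Hdl ltac:(lia)) as A1. rewrite acc_S in A1.
      pose proof (Sm_ms m q w (S j) (proj1 HQ) Wtail l ltac:(lia)) as E.
      rewrite (Val_ms m q w (S j) (proj1 HQ) Hw Wtail) in JqW.
      pose proof (proj1 (proj1 HQ) l) as H1.
      change (sumR (q l) (S (m l))) with (acc q l (S (m l))) in H1. rewrite acc_S in H1.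
      pose proof (Lb l w (m l) Hl Hw (le_n _)).
      pose proof (Pi_pos m q w HQ Hw l). nra. }
  pose proof (Val_close m p d w N HP Hd Hw Aw) as B1.
  pose proof (Val_close m p z d' N HP Hz Hd' Az) as B2.
  pose proof (Kn d Hd). pose proof (Kn z Hz).
  replace (Val p d - Val p d') with ((Val p d - Val p w) + (Val p z - Val p d')) by (rewrite JpW, JpZ; ring).
  eapply Rle_lt_trans. apply Rabs_triang. lra.
Qed.
Lemma main_unif m q p : Qpos m q -> Wok m p -> forall eps, 0 < eps -> exists delta, 0 < delta /\
  forall d d', digits_ok m d -> digits_ok m d' -> Rabs (Val q d - Val q d') < delta ->
  Rabs (Val p d - Val p d') < eps.
Proof.
  intros HQ HP eps Heps.
  destruct (koenig m p HP (eps / 2) ltac:(lra)) as [N Kn].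
  destruct (lower m q HQ N) as [delta [Hd Lw]].
  exists delta. split; auto. intros d d' Hd1 Hd2 Hc.
  destruct (first_diff d d' N) as [H | [j [Hj [Ha Hne]]]].
  - pose proof (Val_close m p d d' N HP Hd1 Hd2 H). pose proof (Kn d Hd1). lra.
  - destruct (Nat.lt_total (d j) (d' j)) as [Hl | [Hl | Hl]].
    + apply (oneside m q p N delta eps HQ HP Kn Lw d d' j); auto.
    + contradiction.
    + rewrite Rabs_minus_sym. rewrite Rabs_minus_sym in Hc.
      apply (oneside m q p N delta eps HQ HP Kn Lw d' d j); auto.
      intros k Hk. symmetry. auto.
Qed.

Lemma find_c (f : nat -> R) (r : R) M : f 0%nat <= r <= f (S M) ->
  exists c, (c <= M)%nat /\ f c <= r <= f (S c).
Proof.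
  induction M; intros H.
  - exists 0%nat. split. lia. auto.
  - destruct (Rle_lt_dec (f (S M)) r).
    + exists (S M). split. lia. lra.
    + destruct IHM as [c [Hc Hr]]. lra. exists c. split. lia. auto.
Qed.

Lemma existence m q : Qpos m q -> forall x, 0 <= x <= 1 -> exists e, digits_ok m e /\ Val q e = x.
Proof.
  intros HQ x Hx.
  set (P := fun k r c => (c <= m k)%nat /\ acc q k c <= r <= acc q k (S c)).
  assert (Ex : forall k r, 0 <= r <= 1 -> exists c, P k r c).
  { intros k r Hr. apply find_c. rewrite acc_0.
    change (acc q k (S (m k))) with (sumR (q k) (S (m k))). rewrite (proj1 (proj1 HQ) k). lra. }
  set (g := fun k r => epsilon (inhabits 0%nat) (P k r)).
  assert (Hg : forall k r, 0 <= r <= 1 -> P k r (g k r)).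
  { intros k r Hr. apply epsilon_spec. apply Ex; auto. }
  set (rs := fix rs n := match n with O => x | S n' =>
      (rs n' - acc q n' (g n' (rs n'))) / q n' (g n' (rs n')) end).
  set (e := fun n => g n (rs n)).
  assert (R01 : forall n, 0 <= rs n <= 1).
  { induction n. simpl. auto.
    destruct (Hg n (rs n) IHn) as [Hc [Hl Hu]]. rewrite acc_S in Hu.
    pose proof (proj2 HQ n _ Hc).
    change (rs (S n)) with ((rs n - acc q n (g n (rs n))) / q n (g n (rs n))).
    split.
    - apply Rmult_le_pos. lra. left. apply Rinv_0_lt_compat. auto.
    - apply (Rmult_le_reg_r (q n (g n (rs n)))); auto. unfold Rdiv. rewrite Rmult_assoc, Rinv_l; lra. }
  assert (He : digits_ok m e). { intros k. apply (Hg k (rs k) (R01 k)). }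
  assert (Inv : forall n, x = Sm q e n + Pi q e n * rs n).
  { induction n. rewrite Sm_0, Pi_0. simpl. ring.
    rewrite Sm_S, Pi_S. change (rs (S n)) with ((rs n - acc q n (e n)) / q n (e n)).
    pose proof (proj2 HQ n _ (He n)). rewrite IHn. field. lra. }
  exists e. split; auto.
  enough (Val q e - x = 0) by lra.
  apply (zero_of_small _ (Pi q e) 0). apply (proj1 HQ); auto.
  intros N _. destruct (proj2 (Val_rep m q e (proj1 HQ) He) N) as [t [Ht E]].
  rewrite E. rewrite (Inv N).
  replace (Sm q e N + t * Pi q e N - (Sm q e N + Pi q e N * rs N)) with ((t - rs N) * Pi q e N) by ring.
  rewrite Rabs_mult. pose proof (Rabs_pos (Pi q e N)). specialize (R01 N).
  assert (Rabs (t - rs N) <= 1) by (apply Rabs_le; lra). nra.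
Qed.

Definition refl (m : nat -> nat) (k i : nat) : nat := if Nat.odd k then (m k - i)%nat else i.

Lemma tld_refl m (f : nat -> nat -> R) k i : tld m f k i = f k (refl m k i).
Proof. unfold tld, refl. destruct (Nat.odd k); reflexivity. Qed.

Lemma prodR_ext (f g : nat -> R) n : (forall l, f l = g l) -> prodR f n = prodR g n.
Proof. intros H. induction n. reflexivity. simpl. rewrite IHn, H. reflexivity. Qed.

Lemma nega_term_eq m w d k : nega_term m w d k = term w (fun l => refl m l (d l)) k.
Proof.
  unfold nega_term, term, Pi. rewrite tld_refl. f_equal.
  apply prodR_ext. intros l. apply tld_refl.
Qed.

Lemma refl_ok m d : digits_ok m d -> digits_ok m (fun l => refl m l (d l)).
Proof. intros Hd l. specialize (Hd l). unfold refl. destruct (Nat.odd l); lia. Qed.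

Lemma refl_inv m d : digits_ok m d -> forall l, refl m l (refl m l (d l)) = d l.
Proof. intros Hd l. specialize (Hd l). unfold refl. destruct (Nat.odd l); lia. Qed.
Lemma acc_nonneg_mono (q : nat -> nat -> R) m k : (forall i, (i <= m)%nat -> 0 < q k i) ->
  forall c c', (c <= c')%nat -> (c' <= S m)%nat -> 0 <= acc q k c <= acc q k c'.
Proof.
  intros Hq c c' Hc Hc'. induction Hc.
  - induction c. rewrite acc_0; lra. rewrite acc_S. specialize (IHc ltac:(lia)). pose proof (Hq c ltac:(lia)). lra.
  - rewrite acc_S. pose proof (Hq m0 ltac:(lia)). specialize (IHHc ltac:(lia)). lra.
Qed.

Lemma Qok_pos m q : Q_ok m q -> Qpos m q.
Proof.
  intros [H1 [H2 H3]]. split; [split; [auto | split] | auto].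
  - intros k c Hc. pose proof (acc_nonneg_mono q (m k) k (H1 k) c (S (m k)) Hc (le_n _)).
    change (acc q k (S (m k))) with (sumR (q k) (S (m k))) in H. rewrite H2 in H. lra.
  - intros e He. apply H3. auto.
Qed.

Lemma prodR_abs (f : nat -> R) n : Rabs (prodR f n) = prodR (fun l => Rabs (f l)) n.
Proof. induction n. simpl. apply Rabs_R1. simpl. rewrite Rabs_mult, IHn. reflexivity. Qed.

Lemma Pok_w m p : P_ok m p -> Wok m p.
Proof.
  intros [H1 [H2 [H3 H4]]]. split; [auto | split].
  - intros k c Hc. destruct c. rewrite acc_0. lra.
    destruct (Nat.eq_dec c (m k)) as [->|].
    + change (acc p k (S (m k))) with (sumR (p k) (S (m k))). rewrite H2. lra.
    + pose proof (H4 k (S c) ltac:(lia)). unfold acc. lra.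
  - intros e He. apply is_lim_seq_abs_0. unfold Pi.
    apply (is_lim_seq_ext (fun n => prodR (fun l => Rabs (p l (e l))) n)).
    intros n. symmetry. apply prodR_abs. apply H3; auto.
Qed.

Lemma F_val m q p x : Q_ok m q -> 0 <= x <= 1 ->
  exists e, digits_ok m e /\ Val q e = x /\ F m q p x = Val p e.
Proof.
  intros HQ Hx. assert (HQ' := Qok_pos m q HQ).
  assert (Hr : nega_rep m q x (nega_digits m q x)).
  { unfold nega_digits. apply epsilon_spec.
    destruct (existence m q HQ' x Hx) as [e [He Ev]].
    exists (fun l => refl m l (e l)). split. apply refl_ok; auto.
    apply (is_series_ext (term q e)).
    - intros n. rewrite nega_term_eq. unfold term, Pi.
      rewrite (refl_inv m e He n). f_equal. apply prodR_ext. intros l. rewrite (refl_inv m e He l). reflexivity.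
    - rewrite <- Ev. apply (Val_rep m q e (proj1 HQ') He). }
  set (D := nega_digits m q x) in *. destruct Hr as [HD HS].
  exists (fun l => refl m l (D l)). split. apply refl_ok; auto. split.
  - unfold Val. apply is_series_unique. apply (is_series_ext (nega_term m q D)); auto.
    intros n. apply nega_term_eq.
  - unfold F, Val. fold D. apply Series_ext. intros n. apply nega_term_eq.
Qed.

Theorem mainTheorem3 (m : nat -> nat) (q p : nat -> nat -> R)
  (hQ : Q_ok m q) (hP : P_ok m p) :
  forall x, 0 <= x <= 1 ->
  forall eps, 0 < eps -> exists delta, 0 < delta /\
    forall y, 0 <= y <= 1 -> Rabs (y - x) < delta ->
      Rabs (F m q p y - F m q p x) < eps.
Proof.
  intros x Hx eps Heps.
  destruct (main_unif m q p (Qok_pos m q hQ) (Pok_w m p hP) eps Heps) as [delta [Hd H]].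
  exists delta. split; auto. intros y Hy Hyx.
  destruct (F_val m q p x hQ Hx) as [ex [Hex [Vx Fx]]].
  destruct (F_val m q p y hQ Hy) as [ey [Hey [Vy Fy]]].
  rewrite Fx, Fy. apply H; auto. rewrite Vx, Vy. auto.
Qed.
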